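(* Let $\{w_t\}_{t=0}^T$ be generated by the CLion optimizer (defined in the context) for $T$ iterations, and let $\hat G=\max(G,\sqrt d)$. If $\|w_0\|\le\eta\hat G$ and $\lambda\le\frac{1}{2\eta\hat G T^\alpha}$ with $\alpha>1$, then for all $t$, $$\|w_t\|\le(t+1)\eta\hat G,\qquad \|w_t-w_{t-1}\|\le2\eta\hat G.$$
   Context: CLion optimizer with $\eta>0$, $\beta_1,\beta_2\in(0,1)$, $\lambda>0$, $\nu>0$: initialize $w_0\in\mathbb{R}^d$, $m_0=0$; for $t=1,\dots,T$: draw $\xi_t\sim\mathcal{D}$, $g_t=\nabla f(w_{t-1};\xi_t)$, $c_t=\beta_1m_{t-1}+(1-\beta_1)g_t$; with $S_t=\{j:(c_t)_j\ne0\}$, if $\min_{j\in S_t}|(c_t)_j|\ge\nu$ then $w_t=w_{t-1}-\eta(\mathrm{sign}(c_t)+\lambda w_{t-1})$, else $w_t=w_{t-1}-\eta(c_t+\lambda w_{t-1})$; $m_t=\beta_2m_{t-1}+(1-\beta_2)g_t$. Here $\mathrm{sign}$ is coordinatewise with $\mathrm{sign}(0)=0$. $G$ is the constant of the standing assumption that each $f(\cdot;\xi)$ is $G$-Lipschitz: $|f(w_1;\xi)-f(w_2;\xi)|\le G\|w_1-w_2\|$ for all $w_1,w_2,\xi$ (so $\|\nabla f(w;\xi)\|\le G$). $\|\cdot\|$ is the Euclidean norm. *)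

(* Defs.v *)
From mathcomp Require Import all_boot all_order all_algebra.
From mathcomp Require Import all_classical all_reals.
From mathcomp Require Import exp.
Set Implicit Arguments. Unset Strict Implicit. Unset Printing Implicit Defensive.
Import Order.TTheory GRing.Theory Num.Theory.
Local Open Scope ring_scope.

Section CLion.
Variables (R : realType) (d : nat).

Definition enorm (x : 'rV[R]_d) : R := Num.sqrt (\sum_(i < d) x ord0 i ^+ 2).

(* coordinatewise sign, with sign 0 = 0 *)
Definition vsign (x : 'rV[R]_d) : 'rV[R]_d := \row_i Num.sg (x ord0 i).

(* min_{j in S_t} |c_j| >= nu, with S_t = {j : c_j <> 0} *)
Definition min_nz_ge (nu : R) (c : 'rV[R]_d) : Prop :=
  forall j : 'I_d, c ord0 j != 0 -> nu <= `|c ord0 j|.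

(* One CLion run.  [grad w xi] is the stochastic gradient of f(.;xi) at w,
   [xi t] is the sample drawn at iteration t (t >= 1).
   [clion_state t] = (w_t, m_t). *)
Fixpoint clion_state (Xi : Type) (grad : 'rV[R]_d -> Xi -> 'rV[R]_d)
  (xi : nat -> Xi) (eta beta1 beta2 lam nu : R) (w0 : 'rV[R]_d) (t : nat)
  : 'rV[R]_d * 'rV[R]_d :=
  match t with
  | 0 => (w0, 0)
  | t'.+1 =>
    let wm := clion_state grad xi eta beta1 beta2 lam nu w0 t' in
    let w := wm.1 in let m := wm.2 in
    let g := grad w (xi t'.+1) in
    let c := beta1 *: m + (1 - beta1) *: g in
    let w' := if `[< min_nz_ge nu c >]
              then w - eta *: (vsign c + lam *: w)
              else w - eta *: (c + lam *: w) in
    (w', beta2 *: m + (1 - beta2) *: g)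
  end.

Definition clion_w (Xi : Type) grad (xi : nat -> Xi) eta beta1 beta2 lam nu w0 t :=
  (@clion_state Xi grad xi eta beta1 beta2 lam nu w0 t).1.

End CLion.

(* Main.v *)
Require Import Defs.
From mathcomp Require Import all_boot all_order all_algebra.
From mathcomp Require Import all_classical all_reals.
From mathcomp Require Import exp.
From mathcomp Require Import ring lra.
Import Order.TTheory GRing.Theory Num.Theory.
Local Open Scope ring_scope.

Section N.
Variables (R : realType) (d : nat).
Implicit Types x y : 'rV[R]_d.

Lemma enorm_ge0 x : 0 <= enorm x.
Proof. exact: sqrtr_ge0. Qed.

Lemma sumsq_ge0 x : 0 <= \sum_(i < d) x ord0 i ^+ 2.
Proof. by apply: sumr_ge0 => i _; exact: sqr_ge0. Qed.

Lemma enormZ a x : enorm (a *: x) = `|a| * enorm x.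
Proof.
rewrite /enorm.
have -> : \sum_(i < d) (a *: x) ord0 i ^+ 2 = a ^+ 2 * \sum_(i < d) x ord0 i ^+ 2.
  by rewrite mulr_sumr; apply: eq_bigr => i _; rewrite mxE exprMn.
by rewrite sqrtrM ?sqr_ge0 // sqrtr_sqr.
Qed.

Lemma CS x y : (\sum_(i < d) x ord0 i * y ord0 i) ^+ 2 <=
  (\sum_(i < d) x ord0 i ^+ 2) * (\sum_(i < d) y ord0 i ^+ 2).
Proof.
set X := \sum_(i < d) x ord0 i ^+ 2; set Y := \sum_(i < d) y ord0 i ^+ 2.
set P := \sum_(i < d) x ord0 i * y ord0 i.
have key : forall s, 0 <= X * s ^+ 2 + 2 * P * s + Y.
  move=> s.
  have -> : X * s ^+ 2 + 2 * P * s + Y = \sum_(i < d) (x ord0 i * s + y ord0 i) ^+ 2.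
    rewrite /X /P /Y mulr_suml mulr_sumr mulr_suml -!big_split /=.
    by apply: eq_bigr => i _; ring.
  by apply: sumr_ge0 => i _; exact: sqr_ge0.
have X0 : 0 <= X by exact: sumsq_ge0.
have [Xz|Xp] := eqVneq X 0.
  have xi0 : forall i, x ord0 i = 0.
    move=> i; apply/eqP; rewrite -sqrf_eq0; apply/eqP.
    move/eqP: Xz; rewrite psumr_eq0; last by move=> j _; exact: sqr_ge0.
    by move/allP => /(_ i (mem_index_enum _)) /implyP /(_ isT) /eqP.
  have -> : P = 0 by rewrite /P big1 // => i _; rewrite xi0 mul0r.
  by rewrite Xz expr0n /= mul0r.
have Xpos : 0 < X by rewrite lt_neqAle eq_sym Xp X0.
have := key (- P / X).
have -> : X * (- P / X) ^+ 2 + 2 * P * (- P / X) + Y = Y - P ^+ 2 / X.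
  by field.
rewrite subr_ge0 ler_pdivrMr // => h.
by rewrite mulrC.
Qed.

Lemma enormD x y : enorm (x + y) <= enorm x + enorm y.
Proof.
rewrite /enorm.
set X := \sum_(i < d) x ord0 i ^+ 2; set Y := \sum_(i < d) y ord0 i ^+ 2.
set P := \sum_(i < d) x ord0 i * y ord0 i.
have -> : \sum_(i < d) (x + y) ord0 i ^+ 2 = X + 2 * P + Y.
  rewrite /X /P /Y mulr_sumr -!big_split /=.
  by apply: eq_bigr => i _; rewrite mxE; ring.
have X0 : 0 <= X by exact: sumsq_ge0.
have Y0 : 0 <= Y by exact: sumsq_ge0.
have := CS x y; rewrite -/X -/Y -/P => h.
have : `|P| <= Num.sqrt (X * Y) by rewrite -sqrtr_sqr; apply: ler_wsqrtr.
rewrite sqrtrM // => h2.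
have h3 : P <= `|P| by exact: ler_norm.
have e1 := sqr_sqrtr X0. have e2 := sqr_sqrtr Y0.
have s1 := sqrtr_ge0 X. have s2 := sqrtr_ge0 Y.
rewrite -(ler_pXn2r (n:=2)) ?nnegrE ?addr_ge0 ?sqrtr_ge0 //.
have h4 : - P <= `|P| by rewrite -normrN; exact: ler_norm.
have h5 := sqr_ge0 (Num.sqrt X - Num.sqrt Y).
rewrite sqr_sqrtr; last by nra.
rewrite sqrrD e1 e2.
nra.
Qed.

Lemma enorm_vsign (c : 'rV[R]_d) : enorm (vsign c) <= Num.sqrt d%:R.
Proof.
rewrite /enorm; apply: ler_wsqrtr.
have -> : (d%:R : R) = \sum_(i < d) 1 by rewrite sumr_const card_ord.
apply: ler_sum => i _; rewrite mxE.
by case: sgrP => _; rewrite ?expr0n ?sqrrN ?expr1n ?ler01.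
Qed.

Lemma enorm_d0 x : d = 0%N -> enorm x = 0.
Proof.
move=> hd; rewrite /enorm big1 ?sqrtr0 // => i _.
exfalso; have := ltn_ord i; by move: (nat_of_ord i) hd => k ->.
Qed.

Lemma enorm_conv b x y M : 0 <= b <= 1 -> enorm x <= M -> enorm y <= M ->
  enorm (b *: x + (1 - b) *: y) <= M.
Proof.
move=> /andP [b0 b1] hx hy.
apply: le_trans (enormD _ _) _.
rewrite !enormZ ger0_norm // ger0_norm ?subr_ge0 //.
have := enorm_ge0 x; have := enorm_ge0 y.
nra.
Qed.
End N.
Arguments enormD {R d}.
Arguments enorm_ge0 {R d}.
Arguments enorm_vsign {R d}.

Lemma enorm0 (R : realType) (d : nat) : enorm (0 : 'rV[R]_d) = 0.
Proof. by rewrite /enorm big1 ?sqrtr0 // => i _; rewrite mxE expr0n. Qed.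

Lemma m_bound (R : realType) (d : nat) (Xi : Type)
  (grad : 'rV[R]_d -> Xi -> 'rV[R]_d) (xi : nat -> Xi)
  (G eta beta1 beta2 lam nu : R) (w0 : 'rV[R]_d) :
  0 <= G -> (forall w z, enorm (grad w z) <= G) -> 0 <= beta2 <= 1 ->
  forall t, enorm (clion_state grad xi eta beta1 beta2 lam nu w0 t).2 <= G.
Proof.
move=> G0 hg hb; elim=> [|t IH] /=; first by rewrite enorm0.
exact: enorm_conv.
Qed.

Lemma step (R : realType) (d : nat) (Xi : Type)
  (grad : 'rV[R]_d -> Xi -> 'rV[R]_d) (xi : nat -> Xi)
  (G eta beta1 beta2 lam nu Gh : R) (w0 : 'rV[R]_d) :
  0 <= G -> (forall w z, enorm (grad w z) <= G) -> 0 <= beta1 <= 1 -> 0 <= beta2 <= 1 ->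
  G <= Gh -> Num.sqrt d%:R <= Gh ->
  forall t, exists u, enorm u <= Gh /\
   clion_w grad xi eta beta1 beta2 lam nu w0 t.+1 =
   clion_w grad xi eta beta1 beta2 lam nu w0 t - eta *: (u + lam *: clion_w grad xi eta beta1 beta2 lam nu w0 t).
Proof.
move=> G0 hg hb1 hb2 hG hd t.
rewrite /clion_w /=.
set st := clion_state _ _ _ _ _ _ _ _ t.
set c := beta1 *: st.2 + _.
have hc : enorm c <= G.
  by apply: enorm_conv => //; exact: m_bound.
case: asboolP => _ /=.
  by exists (vsign c); split => //; apply: le_trans (enorm_vsign c) hd.
by exists c; split => //; apply: le_trans hc hG.
Qed.

Lemma vec_id1 (R : realType) (d : nat) (w u : 'rV[R]_d) eta lam :
  w - eta *: (u + lam *: w) = (1 - eta * lam) *: w + (- eta) *: u.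
Proof. by apply/rowP => i; rewrite !mxE; ring. Qed.

Lemma vec_id2 (R : realType) (d : nat) (w u : 'rV[R]_d) eta lam :
  w - eta *: (u + lam *: w) - w = (- eta) *: (u + lam *: w).
Proof. by apply/rowP => i; rewrite !mxE; ring. Qed.

Theorem lemma3 (R : realType) (d : nat) (Xi : Type)
  (grad : 'rV[R]_d -> Xi -> 'rV[R]_d) (xi : nat -> Xi)
  (G eta beta1 beta2 lam nu alpha : R) (T : nat) (w0 : 'rV[R]_d) :
  (forall (w : 'rV[R]_d) (z : Xi), enorm (grad w z) <= G) ->
  0 < eta -> 0 < beta1 < 1 -> 0 < beta2 < 1 -> 0 < lam -> 0 < nu ->
  1 < alpha ->
  let Ghat := Num.max G (Num.sqrt d%:R) in
  enorm w0 <= eta * Ghat ->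
  lam <= (2 * eta * Ghat * (T%:R `^ alpha))^-1 ->
  forall t : nat, (t <= T)%N ->
    enorm (clion_w grad xi eta beta1 beta2 lam nu w0 t) <= t.+1%:R * eta * Ghat /\
    ((1 <= t)%N ->
     enorm (clion_w grad xi eta beta1 beta2 lam nu w0 t
            - clion_w grad xi eta beta1 beta2 lam nu w0 t.-1) <= 2 * eta * Ghat).
Proof.
move=> hg heta /andP[b10 b11] /andP[b20 b21] hlam hnu halpha Ghat hw0 hlT.
set W := clion_w grad xi eta beta1 beta2 lam nu w0.
have G0 : 0 <= G by apply: le_trans (hg 0 (xi 0%N)); exact: enorm_ge0.
have hGG : G <= Ghat by rewrite le_max lexx.
have hGd : Num.sqrt d%:R <= Ghat by rewrite le_max lexx orbT.
have Gh0 : 0 <= Ghat by apply: le_trans hGG.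
have [d0|dpos] := eqVneq d 0%N.
  move=> t _; rewrite !enorm_d0 //; split; last by move=> _; nra.
  apply: mulr_ge0 => //; apply: mulr_ge0 => //; exact: ltW.
have Gh1 : 1 <= Ghat.
  apply: le_trans hGd.
  have h : (1 : R) <= d%:R by rewrite ler1n lt0n.
  by apply: le_trans (ler_wsqrtr h); rewrite sqrtr1.
have hb1 : 0 <= beta1 <= 1 by rewrite !ltW.
have hb2 : 0 <= beta2 <= 1 by rewrite !ltW.
have hstep := @step R d Xi grad xi G eta beta1 beta2 lam nu Ghat w0 G0 hg hb1 hb2 hGG hGd.
have key : (1 <= T)%N -> eta * lam * T%:R <= 2^-1.
  move=> T1.
  have T1r : 1 <= (T%:R : R) by rewrite ler1n.
  have hP : T%:R <= T%:R `^ alpha by apply: le1r_powR => //; exact: ltW.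
  set P := T%:R `^ alpha in hlT hP.
  have Kpos : 0 < 2 * eta * Ghat * P.
    apply: mulr_gt0; last by apply: lt_le_trans hP; apply: lt_le_trans T1r.
    apply: mulr_gt0; last by apply: lt_le_trans Gh1.
    by apply: mulr_gt0.
  have h1 : lam * (2 * eta * Ghat * P) <= 1.
    by have := ler_wpM2r (ltW Kpos) hlT; rewrite mulVf // gt_eqF.
  have e1 : eta * lam * T%:R <= eta * lam * P.
    by apply: ler_wpM2l => //; apply: mulr_ge0; apply: ltW.
  have e2 : eta * lam * P <= eta * lam * (Ghat * P).
    apply: ler_wpM2l; first by apply: mulr_ge0; apply: ltW.
    rewrite -[X in X <= _]mul1r; apply: ler_wpM2r => //.
    by apply: le_trans hP; apply: le_trans T1r.
  have e3 : eta * lam * (Ghat * P) = lam * (2 * eta * Ghat * P) * 2^-1 by field.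
  apply: le_trans e1 (le_trans e2 _); rewrite e3.
  have i2 : 0 <= (2 : R)^-1 by rewrite invr_ge0 ler0n.
  by have := ler_wpM2r i2 h1; rewrite mul1r.
have bound : forall t, (t <= T)%N -> enorm (W t) <= t.+1%:R * eta * Ghat.
  elim=> [|t IH] ht; first by rewrite mul1r.
  have T1 : (1 <= T)%N by apply: leq_trans ht.
  have k := key T1.
  have hel : 0 <= eta * lam by apply: mulr_ge0; apply: ltW.
  have hel1 : eta * lam <= 1.
    have : eta * lam <= eta * lam * T%:R.
      rewrite -[X in X <= _]mulr1; apply: ler_wpM2l => //; by rewrite ler1n.
    move=> h; apply: le_trans h _; apply: le_trans k _.
    by rewrite invf_le1 // ler1n.
  have [u [hu E]] := hstep t.
  rewrite /W E -/W vec_id1; apply: le_trans (enormD _ _) _.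
  rewrite !enormZ ger0_norm ?subr_ge0 // normrN gtr0_norm //.
  have IH' := IH (ltnW ht).
  have n0 := enorm_ge0 (W t).
  rewrite -/W mulrSr.
  nra.
move=> t ht; split; first exact: bound.
case: t ht => [|s] hs _ //=.
have [u [hu E]] := hstep s.
rewrite /W E -/W vec_id2 enormZ normrN gtr0_norm //.
apply: le_trans (ler_wpM2l (ltW heta) (enormD _ _)) _.
rewrite enormZ gtr0_norm //.
have bs := bound s (ltnW hs).
have k := key (leq_trans (ltn0Sn s) hs).
have hsT : (s.+1%:R : R) <= T%:R by rewrite ler_nat.
have n0 := enorm_ge0 (W s).
have : eta * lam * s.+1%:R <= 2^-1.
  apply: le_trans k; apply: ler_wpM2l => //; apply: mulr_ge0; exact: ltW.
move=> k2.
have h1 : lam * enorm (W s) <= lam * (s.+1%:R * eta * Ghat).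
  by apply: ler_wpM2l => //; exact: ltW.
have h2 : lam * (s.+1%:R * eta * Ghat) <= Ghat.
  have -> : lam * (s.+1%:R * eta * Ghat) = (eta * lam * s.+1%:R) * Ghat by ring.
  rewrite -[X in _ <= X]mul1r; apply: ler_wpM2r => //.
  apply: le_trans k2 _; by rewrite invf_le1 // ler1n.
have h3 : enorm u + lam * enorm (W s) <= 2 * Ghat.
  have := le_trans h1 h2. lra.
have := ler_wpM2l (ltW heta) h3.
by rewrite mulrA (mulrC eta 2).
Qed.
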